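(* Let $d\in\mathbb{N}_+$, $T>0$, and let $f\colon\mathbb{R}^d\times[0,T]\to\mathbb{R}^d$ be continuous in $t$ with $\|f(x,t)-f(y,t)\|\le L\|x-y\|$ for all $x,y\in\mathbb{R}^d$, $t\in[0,T]$, for some $L>0$. Let $K\subseteq\mathbb{R}^d$ be compact and for $t\in[0,T]$ define $$K_t:=\Big\{x\in\mathbb{R}^d:\ \|x\|\le\sup_{z\in K}\Big(\|z\|+t+\int_0^t\|f(0,s)\|\,ds\Big)\exp(Lt)\Big\}.$$ Let $f_1\in\mathcal{C}(\mathbb{R}^d\times[0,T];\mathbb{R}^d)$ be locally Lipschitz in $x$ and satisfy $\|f_1-f\|_{L^\infty(K_T\times[0,T];\mathbb{R}^d)}\le1$, and let $\mathbf{y}$ be the solution of $\dot{\mathbf y}=f_1(\mathbf y,t)$, $\mathbf y(0)=z_0\in K$. Then $\mathbf y(t)\in K_t$ for every $t\in[0,T]$.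
   Context: $\|\cdot\|$ denotes the Euclidean norm on $\mathbb{R}^d$. *)

(* Defs.v *)
From HB Require Import structures.
From mathcomp Require Import all_boot all_order all_algebra.
From mathcomp Require Import all_classical all_reals all_analysis.
Set Implicit Arguments. Unset Strict Implicit. Unset Printing Implicit Defensive.
Import Order.TTheory GRing.Theory Num.Theory.
Import numFieldNormedType.Exports.
Local Open Scope classical_set_scope.
Local Open Scope ring_scope.

(* Euclidean norm on R^d (the library norm on 'rV is the max norm). *)
Definition enorm {R : realType} {d : nat} (x : 'rV[R]_d) : R :=
  Num.sqrt (\sum_(i < d) (x ord0 i) ^+ 2).

Definition int_f0 {R : realType} {d : nat} (f : 'rV[R]_d -> R -> 'rV[R]_d)
  (t : R) : R :=
  Rintegral lebesgue_measure [set` `[0, t]] (fun s => enorm (f 0 s)).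

Definition Kradius {R : realType} {d : nat} (f : 'rV[R]_d -> R -> 'rV[R]_d)
  (L : R) (K : set 'rV[R]_d) (t : R) : R :=
  sup [set enorm z + t + int_f0 f t | z in K] * expR (L * t).

Definition Kt {R : realType} {d : nat} (f : 'rV[R]_d -> R -> 'rV[R]_d)
  (L : R) (K : set 'rV[R]_d) (t : R) : set 'rV[R]_d :=
  [set x | enorm x <= Kradius f L K t].

Definition loc_lipschitz_x {R : realType} {d : nat}
  (g : 'rV[R]_d -> R -> 'rV[R]_d) (T : R) : Prop :=
  forall x0 : 'rV[R]_d, exists r : R, exists M : R, 0 < r /\
    forall x y : 'rV[R]_d, forall t : R, t \in `[0, T] ->
      enorm (x - x0) < r -> enorm (y - x0) < r ->
      enorm (g x t - g y t) <= M * enorm (x - y).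

(* Main.v *)
Require Import Defs.
From HB Require Import structures.
From mathcomp Require Import all_boot all_order all_algebra.
From mathcomp Require Import all_classical all_reals all_analysis.
From mathcomp Require Import ring lra.
Import Order.TTheory GRing.Theory Num.Theory.
Import numFieldNormedType.Exports.
Local Open Scope classical_set_scope.
Local Open Scope ring_scope.

Lemma sum_prod2 (R : realType) n (u v : 'I_n -> R) :
  \sum_i \sum_j (u i * v j) = (\sum_i u i) * (\sum_j v j).
Proof. rewrite mulr_suml; apply: eq_bigr => i _; by rewrite mulr_sumr. Qed.

Lemma CS2 (R : realType) n (a b : 'I_n -> R) :
  (\sum_i a i * b i) ^+ 2 <= (\sum_i a i ^+ 2) * (\sum_i b i ^+ 2).
Proof.
have E : \sum_i \sum_j (a i * b j - a j * b i) ^+ 2 =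
   2 * ((\sum_i a i ^+ 2) * (\sum_i b i ^+ 2) - (\sum_i a i * b i) ^+ 2).
  transitivity (\sum_i \sum_j (a i ^+ 2 * b j ^+ 2)
      + \sum_i \sum_j (b i ^+ 2 * a j ^+ 2)
      - 2 * \sum_i \sum_j ((a i * b i) * (a j * b j))).
    rewrite -big_split /= mulr_sumr -sumrB; apply: eq_bigr => i _.
    rewrite -big_split /= mulr_sumr -sumrB; apply: eq_bigr => j _.
    ring.
  rewrite !sum_prod2 [(\sum_i b i ^+ 2) * _]mulrC. ring.
have : 0 <= \sum_i \sum_j (a i * b j - a j * b i) ^+ 2.
  by apply: sumr_ge0 => i _; apply: sumr_ge0 => j _; exact: sqr_ge0.
by rewrite E pmulr_rge0 // subr_ge0.
Qed.

Lemma CS (R : realType) n (a b : 'I_n -> R) :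
  \sum_i a i * b i <= Num.sqrt (\sum_i a i ^+ 2) * Num.sqrt (\sum_i b i ^+ 2).
Proof.
have [C0|C0] := lerP (\sum_i a i * b i) 0.
  by apply: le_trans C0 _; rewrite mulr_ge0 // sqrtr_ge0.
rewrite -sqrtrM; last by apply: sumr_ge0 => i _; exact: sqr_ge0.
rewrite -[X in X <= _]gtr0_norm // -sqrtr_sqr.
exact/ler_wsqrtr/CS2.
Qed.

Lemma enorm_ge0 (R : realType) d (x : 'rV[R]_d) : 0 <= enorm x.
Proof. exact: sqrtr_ge0. Qed.

Lemma enorm_dot (R : realType) d (x y : 'rV[R]_d) :
  \sum_i x ord0 i * y ord0 i <= enorm x * enorm y.
Proof. exact: CS. Qed.

Lemma enorm_sqr (R : realType) d (x : 'rV[R]_d) :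
  enorm x ^+ 2 = \sum_i (x ord0 i) ^+ 2.
Proof. by rewrite /enorm sqr_sqrtr //; apply: sumr_ge0 => i _; exact: sqr_ge0. Qed.

Lemma enormD (R : realType) d (x y : 'rV[R]_d) :
  enorm (x + y) <= enorm x + enorm y.
Proof.
rewrite /enorm -[X in _ <= X]ger0_norm; last by rewrite addr_ge0 // sqrtr_ge0.
rewrite -sqrtr_sqr; apply: ler_wsqrtr.
have -> : \sum_i (x + y) ord0 i ^+ 2 =
   \sum_i (x ord0 i) ^+ 2 + 2 * \sum_i (x ord0 i * y ord0 i) + \sum_i (y ord0 i) ^+ 2.
  rewrite mulr_sumr -!big_split /=; apply: eq_bigr => i _; rewrite mxE; ring.
rewrite sqrrD !sqr_sqrtr; try (apply: sumr_ge0 => i _; exact: sqr_ge0).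
rewrite lerD2r lerD2l.
have := @CS _ _ (fun i => x ord0 i) (fun i => y ord0 i); rewrite /= mulr2n; nra.

Qed.

Lemma enormN (R : realType) d (x : 'rV[R]_d) : enorm (- x) = enorm x.
Proof. rewrite /enorm; congr Num.sqrt; apply: eq_bigr => i _; by rewrite mxE sqrrN. Qed.

Lemma enorm0 (R : realType) d : enorm (0 : 'rV[R]_d) = 0.
Proof. rewrite /enorm big1 ?sqrtr0 // => i _; by rewrite mxE expr0n. Qed.

Lemma continuous_sumf (R : realType) (T : topologicalType) n (h : 'I_n -> T -> R) :
  (forall i, continuous (h i)) -> continuous (fun x => \sum_i h i x).
Proof.
elim: n h => [|n IH] h hc x.
  rewrite (_ : (fun x => _) = fun=> 0); first exact: cvg_cst.
  by rewrite funeqE => y; rewrite big_ord0.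
rewrite (_ : (fun x => _) = fun x => \sum_(i < n) h (widen_ord (leqnSn n) i) x + h ord_max x).
  apply: continuousD; last exact: hc.
  by apply: (IH (fun i => h (widen_ord (leqnSn n) i))) => i; exact: hc.
by rewrite funeqE => y; rewrite big_ord_recr.
Qed.

Lemma enormc_continuous (R : realType) d (c : R) :
  continuous (fun x : 'rV[R]_d => Num.sqrt (\sum_i (x ord0 i) ^+ 2 + c)).
Proof.
move=> x; apply: (@continuous_comp _ _ _ (fun x : 'rV[R]_d => \sum_i x ord0 i ^+ 2 + c) Num.sqrt); last exact: sqrt_continuous.
apply: (@continuousD _ _ _ (fun x : 'rV[R]_d => \sum_i x ord0 i ^+ 2) (fun=> c)); last exact: cst_continuous.
apply: (@continuous_sumf _ _ _ (fun i (x : 'rV[R]_d) => x ord0 i ^+ 2)) => i.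
move=> z; apply: (@continuousM _ _ (fun x : 'rV[R]_d => x ord0 i) (fun x : 'rV[R]_d => x ord0 i)); exact: coord_continuous.
Qed.

Lemma enorm_continuous (R : realType) d : continuous (@enorm R d).
Proof.
have := @enormc_continuous R d 0.
by rewrite (_ : (fun x : 'rV[R]_d => _) = @enorm R d) // funeqE => x; rewrite addr0.
Qed.

Lemma is_derive_comp1 (R : realType) (f g : R -> R) (x df dg : R) :
  is_derive x 1 f df -> is_derive (f x) 1 g dg -> is_derive x 1 (g \o f) (dg * df).
Proof.
move=> hf hg.
have df' : derivable f x 1 := @ex_derive _ _ _ _ _ _ _ hf.
have dg' : derivable g (f x) 1 := @ex_derive _ _ _ _ _ _ _ hg.
apply: DeriveDef.
  apply/derivable1_diffP; apply: differentiable_comp; exact/derivable1_diffP.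
by rewrite -derive1E derive1_comp // !derive1E !derive_val.
Qed.

Lemma is_derive_coord (R : realType) d (y : R -> 'rV[R]_d) (t : R) (D : 'rV[R]_d) (i : 'I_d) :
  is_derive t 1 y D -> is_derive t 1 (fun s => y s ord0 i) (D ord0 i).
Proof.
move=> hy; have dy : derivable y t 1 := @ex_derive _ _ _ _ _ _ _ hy.
have dyi : derivable (fun s => y s ord0 i) t 1 by move/derivable_mxP: dy; apply.
have := derive_mx dy; rewrite derive_val => /(congr1 (fun M : 'rV[R]_d => M ord0 i)).
rewrite mxE => ->; exact: derivableP.
Qed.
Lemma dexp (R : realType) (L s : R) :
  is_derive s 1 (fun s => expR (- (L * s))) (expR (- (L * s)) * (- L)).
Proof.
apply: (@is_derive_comp1 _ (fun s => - (L * s)) expR s (-L) _).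
apply: is_derive_eq.
by rewrite -[in RHS](mulr1 L).
Qed.

Lemma du (R : realType) d (y : R -> 'rV[R]_d) (D : 'rV[R]_d) (c s : R) :
  0 < c -> is_derive s 1 y D ->
  is_derive s 1 (fun s => Num.sqrt (\sum_i (y s ord0 i) ^+ 2 + c))
    ((\sum_i y s ord0 i * D ord0 i) / Num.sqrt (\sum_i (y s ord0 i) ^+ 2 + c)).
Proof.
move=> c0 hy.
have hi : forall i, is_derive s 1 (fun s => (y s ord0 i) ^+ 2) (2 * (y s ord0 i * D ord0 i)).
  move=> i; have hc := @is_derive_coord _ _ _ _ _ i hy.
  apply: is_derive_eq.
  rewrite -[y s ord0 i *: D ord0 i]/(y s ord0 i * D ord0 i); ring.
have hphi : is_derive s 1 (fun s => \sum_i (y s ord0 i) ^+ 2 + c)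
    (2 * \sum_i (y s ord0 i * D ord0 i)).
  have := is_derive_sum hi; rewrite fct_sumE => hs.
  by apply: is_derive_eq; rewrite mulr_sumr addr0.
have php : 0 < \sum_i (y s ord0 i) ^+ 2 + c.
  by apply: ltr_wpDl => //; apply: sumr_ge0 => i _; exact: sqr_ge0.
have sp : 0 < Num.sqrt (\sum_i (y s ord0 i) ^+ 2 + c) by rewrite sqrtr_gt0.
have := @is_derive_comp1 _ _ _ _ _ _ hphi (is_derive1_sqrt php).
move=> h; apply: (is_derive_eq h).
field; by rewrite gt_eqF.
Qed.

Lemma gron (R : realType) d (L t1 : R) (F g : R -> R) (y Y : R -> 'rV[R]_d) :
  0 < L -> 0 <= t1 ->
  {within `[0, t1], continuous y} ->
  {within `[0, t1], continuous F} ->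
  (forall s, s \in `]0, t1[ -> is_derive s 1 y (Y s)) ->
  (forall s, s \in `]0, t1[ -> is_derive s 1 F (g s)) ->
  (forall s, s \in `]0, t1[ -> enorm (Y s) <= 1 + L * enorm (y s) + g s) ->
  (forall s, s \in `]0, t1[ -> 0 <= g s) ->
  F 0 = 0 ->
  enorm (y t1) <= (enorm (y 0) + t1 + F t1) * expR (L * t1).
Proof.
move=> L0 t10 cy cF dy dF hY hg F0.
apply/ler_addgt0Pr => e e0.
set E1 := expR (L * t1).
have E10 : 0 < E1 := expR_gt0 _.
pose eta := e / E1.
have eta0 : 0 < eta by rewrite divr_gt0.
pose u := fun s => Num.sqrt (\sum_i (y s ord0 i) ^+ 2 + eta ^+ 2).
pose m := fun s => expR (- (L * s)) * u s - s - F s.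
have um : forall s, enorm (y s) <= u s.
  move=> s; apply: ler_wsqrtr; rewrite lerDl; exact: sqr_ge0.
have upos : forall s, 0 < u s.
  move=> s; rewrite sqrtr_gt0; apply: ltr_wpDl; last exact: exprn_gt0.
  by apply: sumr_ge0 => i _; exact: sqr_ge0.
have cm : {within `[0, t1], continuous m}.
  move=> x; apply: cvgB; [apply: cvgB; [apply: cvgM|]|].
  - by apply: (continuous_subspaceT (f := fun s => expR (- (L * s)))) => z;
      apply: (@continuous_comp _ _ _ (fun s => - (L * s)) expR);
      [apply: cvgN; apply: cvgMl_tmp; exact: cvg_id | exact: continuous_expR].
  - apply: (@continuous_comp (subspace `[0, t1]) _ _ y (fun x : 'rV[R]_d => Num.sqrt (\sum_i (x ord0 i) ^+ 2 + eta ^+ 2))).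
      exact: cy.
    exact: enormc_continuous.
  - by apply: (continuous_subspaceT (f := id)) => z; exact: cvg_id.
  - exact: cF.
pose P := fun s => \sum_i y s ord0 i * Y s ord0 i.
have Dm : forall s, s \in `]0, t1[ -> is_derive s 1 m
   (expR (- (L * s)) * (P s / u s) + u s * (expR (- (L * s)) * - L) - 1 - g s).
  move=> s hs.
  have h1 := @dexp _ L s.
  have h2 := @du _ _ _ _ _ _ (exprn_gt0 2 eta0) (dy s hs).
  have h3 := dF s hs.
  by rewrite /m; apply: is_derive_eq.
have Dle : forall s, s \in `]0, t1[ ->
   expR (- (L * s)) * (P s / u s) + u s * (expR (- (L * s)) * - L) - 1 - g s <= 0.
  move=> s hs.
  have Es0 : 0 < expR (- (L * s)) := expR_gt0 _.
  have Es1 : expR (- (L * s)) <= 1.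
    rewrite expR_le1 oppr_le0 mulr_ge0 // ?ltW //.
    by move: hs; rewrite in_itv /= => /andP[].
  have hP : P s / u s <= enorm (Y s).
    rewrite ler_pdivrMr // [enorm _ * _]mulrC.
    apply: le_trans (@enorm_dot _ _ (y s) (Y s)) _.
    by rewrite ler_wpM2r ?enorm_ge0 ?um.
  have hq : P s / u s <= 1 + L * u s + g s.
    apply: le_trans hP _; apply: le_trans (hY s hs) _.
    by rewrite lerD2r lerD2l ler_pM2l // um.
  have g0 := hg s hs.
  move: hq Es0 Es1 g0; set E := expR _; set q := P s / u s; set us := u s; set gs := g s.
  move=> hq Es0 Es1 g0.
  have h4 : E * q <= E * (1 + L * us + gs) by rewrite ler_pM2l.
  have h5 : E * (1 + gs) <= 1 + gs by rewrite ler_piMl // addr_ge0.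
  nra.
have mono : m t1 <= m 0.
  apply: (@ler0_derive1_nincr _ m 0 t1) => //.
  - by move=> s hs; exact: (@ex_derive _ _ _ _ _ _ _ (Dm s hs)).
  - by move=> s hs; have hD := Dm s hs; rewrite derive1E derive_val; exact: Dle.
have u0 : u 0 <= enorm (y 0) + eta.
  rewrite /u -[X in _ <= X]ger0_norm; last by rewrite addr_ge0 ?enorm_ge0 ?ltW.
  rewrite -sqrtr_sqr; apply: ler_wsqrtr.
  rewrite sqrrD -enorm_sqr lerD2r lerDl.
  by rewrite mulrn_wge0 // mulr_ge0 ?enorm_ge0 ?ltW.
move: mono; rewrite /m mulr0 oppr0 expR0 mul1r F0 !subr0 expRN -/E1.
move=> mono.
have h1 : E1^-1 * u t1 <= enorm (y 0) + eta + t1 + F t1 by lra.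
have h2 : u t1 <= (enorm (y 0) + eta + t1 + F t1) * E1.
  by rewrite -ler_pdivrMr // mulrC.
have h3 : eta * E1 = e by rewrite /eta divfK // gt_eqF.
apply: le_trans (um t1) _; apply: le_trans h2 _.
rewrite -h3; lra.
Qed.

Lemma within_lt (R : realType) (A : set R) (h : R -> R) (x b : R) :
  A x -> {within A, continuous h} -> h x < b ->
  exists2 del : R, 0 < del & forall s, A s -> `|x - s| < del -> h s < b.
Proof.
move=> Ax ch hb.
have := ch x; move=> /cvgr_lt /(_ _ hb).
move=> H1; have H2 : nbhs_subspace x [set t | h t < b] := H1.
rewrite -(nbhs_subspace_in Ax) in H2.
move: H2 => /nbhs_ballP [del del0 H]; exists del => // s As xs.
by apply: H => //; rewrite /ball /= .
Qed.

Lemma F_props (R : realType) (T : R) (g : R -> R) :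
  0 < T -> {within `[0, T], continuous g} -> (forall s, 0 <= g s) ->
  [/\ {within `[0, T], continuous (fun t => Rintegral lebesgue_measure [set` `[0, t]] g)},
      (forall s, s \in `]0, T[ -> is_derive s 1 (fun t => Rintegral lebesgue_measure [set` `[0, t]] g) (g s)),
      Rintegral lebesgue_measure [set` `[0, 0]] g = 0 &
      (forall t, 0 <= t <= T -> 0 <= Rintegral lebesgue_measure [set` `[0, t]] g /\
           Rintegral lebesgue_measure [set` `[0, t]] g <= Rintegral lebesgue_measure [set` `[0, T]] g)].
Proof.
move=> T0 cg g0.
set F := (fun t => Rintegral lebesgue_measure [set` `[0, t]] g).
have ig : lebesgue_measure.-integrable `[0, T] (EFin \o g).
  apply: continuous_compact_integrable => //; exact: segment_compact.
have cF : {within `[0, T], continuous F}.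
  exact: (@parameterized_integral_continuous _ 0 T g (ltW T0) ig).
have dF : forall s, s \in `]0, T[ -> is_derive s 1 F (g s).
  move=> s hs; have /andP[s0 sT] : (0 < s) && (s < T) by move: hs; rewrite in_itv.
  have cgs : {for s, continuous g}.
    have : {within `]0, T[, continuous g}.
      by apply: continuous_subspaceW cg; exact: subset_itv_oo_cc.
    rewrite continuous_open_subspace; last exact: interval_open.
    by apply; rewrite inE /= in_itv /= s0 sT.
  have := @continuous_FTC1_closed R g 0 s T sT ig.
  move=> /= /(_ s0 cgs) [d1 d2].
  by apply: DeriveDef => //; rewrite -derive1E.
have F0 : F 0 = 0 by rewrite /F set_itv1 Rintegral_set1.
split; [exact: cF|exact: dF|exact: F0|]. move=> t /andP[t0 tT].
have mono : forall a b, 0 <= a -> a <= b -> b <= T -> F a <= F b.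
  move=> a b a0 ab bT.
  have h1 : forall x, x \in `]0, T[ -> derivable F x 1.
    by move=> x hx; exact: (@ex_derive _ _ _ _ _ _ _ (dF x hx)).
  have h2 : forall x, x \in `]0, T[ -> 0 <= (F^`())%classic x.
    by move=> x hx; have hD := dF x hx; rewrite derive1E derive_val.
  exact: (ger0_derive1_ndecr h1 h2 cF a0 ab bT).
have := mono 0 t (lexx 0) t0 tT; rewrite F0 => h.
split; first exact: h.
exact: (mono t T t0 tT (lexx T)).
Qed.

Lemma Kbound (R : realType) d (K : set 'rV[R]_d) :
  compact K -> exists M, forall z, K z -> enorm z <= M.
Proof.
move=> cK.
have cK' : compact (enorm @` K).
  exact: continuous_compact (continuous_subspaceT (@enorm_continuous R d)) cK.
have := compact_bounded cK'; rewrite /bounded_near => -[M0 [_ HM0]].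
exists (M0 + 1) => z Kz.
have := HM0 (M0 + 1) (ltr_pwDr ltr01 (lexx M0)) (enorm z) (ex_intro2 _ _ z Kz erefl).
by move=> /= h; apply: le_trans h; exact: ler_norm.
Qed.

Theorem lemma3p2 (R : realType) (d : nat) (T L : R)
  (f f1 : 'rV[R]_d -> R -> 'rV[R]_d) (K : set 'rV[R]_d)
  (z0 : 'rV[R]_d) (y : R -> 'rV[R]_d) :
  (0 < d)%N -> 0 < T -> 0 < L ->
  (forall x : 'rV[R]_d, {within [set` `[0, T]], continuous (f x)}) ->
  (forall (x x' : 'rV[R]_d) (t : R), t \in `[0, T] ->
      enorm (f x t - f x' t) <= L * enorm (x - x')) ->
  compact K ->
  {within [set p : 'rV[R]_d * R | p.2 \in `[0, T]],
     continuous (fun p : 'rV[R]_d * R => f1 p.1 p.2)} ->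
  loc_lipschitz_x f1 T ->
  (forall (x : 'rV[R]_d) (t : R), Kt f L K T x -> t \in `[0, T] ->
      enorm (f1 x t - f x t) <= 1) ->
  K z0 ->
  {within [set` `[0, T]], continuous y} ->
  (forall t : R, t \in `]0, T[ -> is_derive t 1 y (f1 (y t) t)) ->
  y 0 = z0 ->
  forall t : R, t \in `[0, T] -> Kt f L K t (y t).
Proof.
move=> d0 T0 L0 cf Lip cK cf1 ll1 close Kz0 cy dy y0.
set g := fun s => enorm (f 0 s).
have cg : {within `[0, T], continuous g}.
  move=> x; apply: (@continuous_comp (subspace `[0, T]) _ _ (f 0) (@enorm R d)).
    exact: cf.
  exact: enorm_continuous.
have g0 : forall s, 0 <= g s by move=> s; exact: enorm_ge0.
have [cF dF F0 Fmono] := @F_props _ _ _ T0 cg g0.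
have F0' : int_f0 f 0 = 0 := F0.
have Fm : forall t, 0 <= t <= T -> 0 <= int_f0 f t /\ int_f0 f t <= int_f0 f T := Fmono.
have [M HM] := @Kbound _ _ _ cK.
pose S t := [set enorm z + t + int_f0 f t | z in K].
have hs : forall t, has_sup (S t).
  move=> t; split; first by exists (enorm z0 + t + int_f0 f t); exists z0.
  exists (M + t + int_f0 f t) => r [z Kz <-].
  by rewrite lerD2r lerD2r HM.
have KRge : forall t, 0 <= t <= T ->
    (enorm z0 + t + int_f0 f t) * expR (L * t) <= Kradius f L K t.
  move=> t _; rewrite /Kradius ler_pM2r ?expR_gt0 //.
  by apply: (sup_upper_bound (hs t)); exists z0.
have KRlt : forall t, 0 <= t -> t < T -> Kradius f L K t < Kradius f L K T.
  move=> t t0 tT.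
  have [Ft0 FtT] := Fm t (andb_true_intro (conj t0 (ltW tT))).
  have supT : enorm z0 + T + int_f0 f T <= sup (S T).
    by apply: (sup_upper_bound (hs T)); exists z0.
  have st : sup (S t) <= sup (S T) - (T - t).
    apply: ge_sup; first by exists (enorm z0 + t + int_f0 f t); exists z0.
    move=> r [z Kz <-].
    have : enorm z + T + int_f0 f T <= sup (S T).
      by apply: (sup_upper_bound (hs T)); exists z.
    lra.
  have st0 : 0 <= sup (S t).
    have h : enorm z0 + t + int_f0 f t <= sup (S t).
      by apply: (sup_upper_bound (hs t)); exists z0.
    have := @enorm_ge0 _ _ z0; lra.
  have Et : 0 < expR (L * t) := expR_gt0 _.
  have EtT : expR (L * t) <= expR (L * T) by rewrite ler_expR ler_pM2l // ltW.
  rewrite /Kradius.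
  apply: (@lt_le_trans _ _ (sup (S T) * expR (L * t))).
    by rewrite ltr_pM2r //; lra.
  by rewrite ler_pM2l //; lra.
have key : forall t1, 0 <= t1 -> t1 <= T ->
    (forall s, 0 < s -> s < t1 -> Kt f L K T (y s)) ->
    enorm (y t1) <= Kradius f L K t1.
  move=> t1 t10 t1T hK.
  have sub : `[0, t1] `<=` `[0, T].
    move=> x /=; rewrite !in_itv /= => /andP[a b].
    by rewrite a (le_trans b t1T).
  have subo : forall s, s \in `]0, t1[ -> s \in `]0, T[.
    move=> x; rewrite !in_itv /= => /andP[a b].
    by rewrite a (lt_le_trans b t1T).
  have := @gron _ _ L t1 (int_f0 f) g y (fun s => f1 (y s) s) L0 t10
    (continuous_subspaceW sub cy) (continuous_subspaceW sub cF)
    (fun s hs0 => dy s (subo s hs0)) (fun s hs0 => dF s (subo s hs0)) _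
    (fun s _ => g0 s) F0.
  rewrite y0 => h; apply: le_trans (KRge t1 _); first apply: h.
    move=> s hs1; move: (hs1); rewrite in_itv /= => /andP[s0 st1].
    have sT : s \in `[0, T] by rewrite in_itv /= ltW // ltW // (lt_le_trans st1 t1T).
    have E : f1 (y s) s = (f1 (y s) s - f (y s) s) + (f (y s) s - f 0 s) + f 0 s.
      by rewrite [X in _ = X + _]addrA !subrK.
    rewrite E; apply: le_trans (@enormD _ _ _ _) _; rewrite lerD2r.
    apply: le_trans (@enormD _ _ _ _) _.
    have h1 := close (y s) s (hK s s0 st1) sT.
    have h2 := Lip (y s) 0 s sT; rewrite subr0 in h2.
    by apply: lerD.
  by rewrite t10 t1T.
set RT := Kradius f L K T.
pose A := [set t | (0 <= t <= T) /\ forall s, 0 <= s <= t -> enorm (y s) <= RT].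
have K0 : enorm z0 <= Kradius f L K 0.
  have := KRge 0 (andb_true_intro (conj (lexx 0) (ltW T0))).
  by rewrite F0' mulr0 expR0 mulr1 !addr0.
have A0 : A 0.
  split; first by rewrite lexx ltW.
  move=> s /andP[s0 s0']; have -> : s = 0 by apply: le_anti; rewrite s0 s0'.
  by rewrite y0; apply: le_trans K0 (ltW (KRlt 0 (lexx 0) T0)).
have hA : has_sup A.
  split; first by exists 0.
  by exists T => r [/andP[]].
set tau := sup A.
have tau0 : 0 <= tau by exact: (sup_upper_bound hA).
have tauT : tau <= T.
  by apply: ge_sup; [exists 0 | move=> r [/andP[]]].
have below : forall s, 0 <= s -> s < tau -> enorm (y s) <= RT.
  move=> s s0 st.
  have [a [_ Ha] sa] := sup_gt (ex_intro _ 0 A0) st.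
  by apply: Ha; rewrite s0 ltW.
have tauE : tau = T.
  apply/eqP; rewrite eq_le tauT /=; rewrite leNgt; apply/negP => tT.
  have ht := key tau tau0 tauT (fun s s0 st => below s (ltW s0) st).
  have hlt : enorm (y tau) < RT := le_lt_trans ht (KRlt tau tau0 tT).
  have ch : {within [set` `[0, T]], continuous (fun s => enorm (y s))}.
    move=> x; apply: (@continuous_comp (subspace `[0, T]) _ _ y (@enorm R d)).
      exact: cy.
    exact: enorm_continuous.
  have tauin : [set` `[0, T]] tau by rewrite /= in_itv /= tau0 tauT.
  have [del del0 Hd] := @within_lt _ _ _ tau RT tauin ch hlt.
  set t' := Num.min (tau + del / 2) T.
  have At' : A t'.
    split.
      apply/andP; split; last by rewrite /t' ge_min lexx orbT.
      rewrite /t' le_min; have h2 : 0 < del / 2 by rewrite divr_gt0.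
      by apply/andP; split; lra.
    move=> s /andP[s0]; rewrite /t' le_min => /andP[s1 s2].
    have [st|ts] := ltP s tau; first exact: below.
    apply: ltW; apply: Hd; first by rewrite /= in_itv /= s0 s2.
    rewrite distrC ger0_norm ?subr_ge0 //.
    have : del / 2 < del by rewrite ltr_pdivrMr // ltr_pMr // ltr1n.
    lra.
  have : t' <= tau by exact: (sup_upper_bound hA).
  rewrite /t' ge_min => /orP[|]; last by rewrite leNgt tT.
  have : 0 < del / 2 by rewrite divr_gt0.
  lra.
move=> t; rewrite in_itv /= => /andP[t0 tT].
apply: key => // s s0 st; apply: below; first exact: ltW.
by rewrite tauE; exact: lt_le_trans st tT.
Qed.
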